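(* Let $\mathcal{C}$ be a fibre-symmetric coherent configuration with two fibres that admits matrices $E^{ij}_r$ satisfying (B1)–(B4). Suppose $\mathcal{C}$ has type $\begin{pmatrix}t+1&t\\&t+1\end{pmatrix}$ for some positive integer $t$, i.e. $t_{11}=t_{22}=t_{12}=t$. Then, setting $\beta$, $\gamma$ to be the two fibres, $X_i=A^{11}_i$ ($0\le i\le t$), $Y_i=A^{22}_i$ ($0\le i\le t$) and $N_h=A^{12}_h$ ($1\le h\le t$), $\mathcal{C}$ is a bipartite coherent configuration.
   Context: Coherent configuration with $f$ fibres: positive integers $x_i$, $t_{ij}$ ($1\le i,j\le f$), $\epsilon_{ij}=1-\delta_{ij}$, $x_i\times x_j$ $0/1$-matrices $A^{ij}_r$ ($\epsilon_{ij}\le r\le t_{ij}$), and $\hat A^{ij}_r$ the $f\times f$ block matrix whose only nonzero block is the $(i,j)$ block equal to $A^{ij}_r$; $\mathcal{C}=\{\hat A^{ij}_r\}$ satisfies $A^{ii}_0=I_{x_i}$, $\sum_{r=\epsilon_{ij}}^{t_{ij}}A^{ij}_r=J_{x_i,x_j}$, closure under transpose, and $\hat A^{ij}_r\hat A^{jh}_s\in\mathrm{Span}(\mathcal{C})$. Fibre-symmetric: $(A^{ii}_r)^T=A^{ii}_r$ for all $i$ and $0\le r\le t_{ii}$. The type of a two-fibre configuration is the symmetric matrix recording the number of matrices in each block: $t_{11}+1$, $t_{12}$, $t_{22}+1$. With $\tilde t_{ij}=t_{ij}-\epsilon_{ij}$, conditions on $x_i\times x_j$ matrices $E^{ij}_r$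 ($0\le r\le\tilde t_{ij}$): (B1) $E^{ij}_0=\frac{1}{\sqrt{x_ix_j}}J_{x_i,x_j}$; (B2) $\{E^{ij}_r\}_r$ is a basis of $\mathrm{Span}\{A^{ij}_r\}_r$; (B3) $(E^{ij}_r)^T=E^{ji}_r$; (B4) $E^{ij}_rE^{j'h}_s=\delta_{j,j'}\delta_{r,s}E^{ih}_r$. Bipartite coherent configuration: finite sets $\beta,\gamma$, positive integers $t_\beta,t_\gamma,t_{\beta\gamma}$, $0/1$-matrices $X_0,\dots,X_{t_\beta}$ ($|\beta|\times|\beta|$), $Y_0,\dots,Y_{t_\gamma}$ ($|\gamma|\times|\gamma|$), $N_1,\dots,N_{t_{\beta\gamma}}$ ($|\beta|\times|\gamma|$); $\mathcal{C}$ is the set of block matrices $\begin{pmatrix}X_i&0\\0&0\end{pmatrix}$, $\begin{pmatrix}0&0\\0&Y_j\end{pmatrix}$, $\begin{pmatrix}0&N_h\\0&0\end{pmatrix}$, $\begin{pmatrix}0&0\\N_h^T&0\end{pmatrix}$, satisfying: (C1) $X_0=I$, $Y_0=I$; (C2) the elements of $\mathcal{C}$ sum to $J$; (C3) closure under transpose; (C4) $M_1M_2\in\mathrm{Span}(\mathcal{C})$ for $M_1,M_2\in\mathcal{C}$; (C5) $N_iN_j^T=N_jN_i^T$ and $N_i^TN_j=N_j^TN_i$ for all $i,j$; (C6) $\{N_iN_j^T\}\cup\{I\}$ spans $\mathrm{Span}\{X_i\}$ and $\{N_i^TN_j\}\cup\{I\}$ spans $\mathrm{Span}\{Y_i\}$.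 *)

(* Defs.v *)
From HB Require Import structures.
From mathcomp Require Import all_boot all_order all_algebra.
From mathcomp Require Import reals.
Set Implicit Arguments. Unset Strict Implicit. Unset Printing Implicit Defensive.
Import Order.TTheory GRing.Theory Num.Theory.
Local Open Scope ring_scope.

(* Fibres are indexed by bool:  true = fibre 1 (beta),  false = fibre 2 (gamma). *)

Section Defs.
Variable R : realType.

Definition is01 m n (M : 'M[R]_(m, n)) : Prop :=
  forall a b, M a b = 0 \/ M a b = 1.

Definition Jmx m n : 'M[R]_(m, n) := const_mx 1.

Definition eps (i j : bool) : nat := (i != j).

Definition hat (x : bool -> nat) (i j : bool) :
    'M[R]_(x i, x j) -> 'M[R]_(x true + x false) :=
  match i, j return 'M[R]_(x i, x j) -> 'M[R]_(x true + x false) with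
  | true, true => fun M => block_mx M 0 0 0
  | true, false => fun M => block_mx 0 M 0 0
  | false, true => fun M => block_mx 0 0 M 0
  | false, false => fun M => block_mx 0 0 0 M
  end.

Definition fibres : seq bool := [:: true; false].

Definition rng (t : bool -> bool -> nat) (i j : bool) : seq nat :=
  iota (eps i j) (t i j - eps i j).+1.

Definition Cseq (x : bool -> nat) (t : bool -> bool -> nat)
    (A : forall i j : bool, nat -> 'M[R]_(x i, x j)) : seq 'M[R]_(x true + x false) :=
  flatten [seq flatten [seq [seq hat (A i j r) | r <- rng t i j] | j <- fibres]
          | i <- fibres].

Definition coherent2 (x : bool -> nat) (t : bool -> bool -> nat)
    (A : forall i j : bool, nat -> 'M[R]_(x i, x j)) : Prop :=
  (forall i, (0 < x i)%N) /\
  (forall i j, (0 < t i j)%N) /\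
  (forall i j r, (eps i j <= r <= t i j)%N -> is01 (A i j r)) /\
  (forall i, A i i 0%N = 1%:M) /\
  (forall i j, \sum_(r <- rng t i j) A i j r = Jmx (x i) (x j)) /\
  (forall M, M \in Cseq t A -> M^T \in Cseq t A) /\
  (forall i j h r s, (eps i j <= r <= t i j)%N -> (eps j h <= s <= t j h)%N ->
     hat (A i j r) *m hat (A j h s) \in span (Cseq t A)).

Definition fibre_symmetric (x : bool -> nat) (t : bool -> bool -> nat)
    (A : forall i j : bool, nat -> 'M[R]_(x i, x j)) : Prop :=
  forall i r, (r <= t i i)%N -> (A i i r)^T = A i i r.

Definition tt (t : bool -> bool -> nat) (i j : bool) : nat := t i j - eps i j.

Definition condB (x : bool -> nat) (t : bool -> bool -> nat)
    (A : forall i j : bool, nat -> 'M[R]_(x i, x j))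
    (E : forall i j : bool, nat -> 'M[R]_(x i, x j)) : Prop :=
      (forall i j, E i j 0%N = (Num.sqrt ((x i * x j)%N%:R))^-1 *: Jmx (x i) (x j)) /\
      (forall i j, basis_of (span [seq A i j r | r <- rng t i j])
                            [seq E i j r | r <- iota 0 (tt t i j).+1]) /\
      (forall i j r, (r <= tt t i j)%N -> (E i j r)^T = E j i r) /\
      (* B4 (case j = j') *)
      (forall i j h r s, (r <= tt t i j)%N -> (s <= tt t j h)%N ->
         (r = s -> (r <= tt t i h)%N /\ E i j r *m E j h s = E i h r) /\
         (r <> s -> E i j r *m E j h s = 0)).

Definition BCseq nb ng tb tg tbg (X : nat -> 'M[R]_nb) (Y : nat -> 'M[R]_ng)
    (N : nat -> 'M[R]_(nb, ng)) : seq 'M[R]_(nb + ng) :=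
  [seq block_mx (X i) 0 0 0 | i <- iota 0 tb.+1] ++
  [seq block_mx 0 0 0 (Y j) | j <- iota 0 tg.+1] ++
  [seq block_mx 0 (N h) 0 0 | h <- iota 1 tbg] ++
  [seq block_mx 0 0 (N h)^T 0 | h <- iota 1 tbg].

Definition bipartite_cc nb ng tb tg tbg (X : nat -> 'M[R]_nb) (Y : nat -> 'M[R]_ng)
    (N : nat -> 'M[R]_(nb, ng)) : Prop :=
  let C := BCseq tb tg tbg X Y N in
  ((0 < tb)%N /\ (0 < tg)%N /\ (0 < tbg)%N) /\
  ((forall i, (i <= tb)%N -> is01 (X i)) /\ (forall j, (j <= tg)%N -> is01 (Y j))
        /\ (forall h, (1 <= h <= tbg)%N -> is01 (N h))) /\
      (X 0%N = 1%:M /\ Y 0%N = 1%:M) /\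
      (\sum_(M <- C) M = Jmx (nb + ng) (nb + ng)) /\
      (forall M, M \in C -> M^T \in C) /\
      (forall M1 M2, M1 \in C -> M2 \in C -> M1 *m M2 \in span C) /\
      (forall i j, (1 <= i <= tbg)%N -> (1 <= j <= tbg)%N ->
                 N i *m (N j)^T = N j *m (N i)^T /\ (N i)^T *m N j = (N j)^T *m N i) /\
      (span (1%:M :: [seq N i *m (N j)^T | i <- iota 1 tbg, j <- iota 1 tbg])
                 = span [seq X i | i <- iota 0 tb.+1] /\
               span (1%:M :: [seq (N i)^T *m N j | i <- iota 1 tbg, j <- iota 1 tbg])
                 = span [seq Y i | i <- iota 0 tg.+1]).

End Defs.

(* Main.v *)
Require Import Defs.
From HB Require Import structures.
From mathcomp Require Import all_boot all_order all_algebra.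
From mathcomp Require Import reals.
From mathcomp Require Import zify.
Import Order.TTheory GRing.Theory Num.Theory.
Local Open Scope ring_scope.

Lemma lin_span (K : fieldType) (V W : vectType K) (f : V -> W) (X : seq V)
   (Y : {vspace W}) :
  (forall a u v, f (a *: u + v) = a *: f u + f v) ->
  (forall x, x \in X -> f x \in Y) -> forall v, v \in span X -> f v \in Y.
Proof.
move=> fL fX v vX; rewrite (coord_span (X := in_tuple X) vX).
have f0 : f 0 = 0.
  have := fL 1 0 0; rewrite scale1r addr0 scale1r => h.
  by apply: (addrI (f 0)); rewrite addr0 -h.
elim/big_rec: _ => [|i s _ Hs]; first by rewrite f0 mem0v.
rewrite fL; apply: memvD => //; apply: memvZ; apply: fX.
exact: mem_nth (ltn_ord i).
Qed.

Lemma bilin_span (K : fieldType) (U V W : vectType K) (m : U -> V -> W)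
   (X : seq U) (Z : seq V) (Y : {vspace W}) :
  (forall a u u' v, m (a *: u + u') v = a *: m u v + m u' v) ->
  (forall a u v v', m u (a *: v + v') = a *: m u v + m u v') ->
  (forall x z, x \in X -> z \in Z -> m x z \in Y) ->
  forall u v, u \in span X -> v \in span Z -> m u v \in Y.
Proof.
move=> mL mR mXZ u v uX vZ.
apply: (@lin_span _ _ _ (m u) Z Y) vZ => // z zZ.
by apply: (@lin_span _ _ _ (m^~ z) X Y) uX => // y yX; apply: mXZ.
Qed.

Lemma free_of_basis (K : fieldType) (V : vectType K) (X Y : seq V) :
  basis_of (span X) Y -> size Y = size X -> free X.
Proof.
move=> bY sYX; rewrite /free -sYX.
by rewrite -(size_basis (X := in_tuple Y) bY).
Qed.

Lemma sum_block (K : fieldType) m1 m2 n1 n2 I (s : seq I)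
  (a : I -> 'M[K]_(m1, n1)) (b : I -> 'M[K]_(m1, n2))
  (c : I -> 'M[K]_(m2, n1)) (d : I -> 'M[K]_(m2, n2)) :
  \sum_(i <- s) block_mx (a i) (b i) (c i) (d i) =
  block_mx (\sum_(i <- s) a i) (\sum_(i <- s) b i) (\sum_(i <- s) c i) (\sum_(i <- s) d i).
Proof.
elim: s => [|i s IH]; first by rewrite !big_nil block_mx0.
by rewrite !big_cons IH add_block_mx.
Qed.

Lemma big_cat_add (K : fieldType) m n (s1 s2 : seq 'M[K]_(m, n)) :
  \sum_(M <- s1 ++ s2) M = \sum_(M <- s1) M + \sum_(M <- s2) M.
Proof. exact: big_cat. Qed.

Lemma tr0 (K : fieldType) m n (M : 'M[K]_(m, n)) : M^T = 0 -> M = 0.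
Proof. by move=> h; rewrite -[M]trmxK h trmx0. Qed.

Theorem lemma10p1 (R : realType) (x : bool -> nat) (t : bool -> bool -> nat)
    (A : forall i j : bool, nat -> 'M[R]_(x i, x j))
    (E : forall i j : bool, nat -> 'M[R]_(x i, x j)) (tp : nat) :
  coherent2 t A -> fibre_symmetric t A -> condB t A E ->
  (0 < tp)%N -> t true true = tp -> t false false = tp -> t true false = tp ->
  bipartite_cc tp tp tp (A true true) (A false false) (A true false) /\
  BCseq tp tp tp (A true true) (A false false) (A true false) =i Cseq t A.
Proof.
move=> [xpos [tpos [A01 [A0 [Asum [Atr Aprod]]]]]] Fsym [B1 [B2 [B3 B4]]] tp0 Htt Hff Htf.
have rngtt : rng t true true = iota 0 tp.+1 by rewrite /rng /eps Htt /= subn0.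
have rngff : rng t false false = iota 0 tp.+1 by rewrite /rng /eps Hff /= subn0.
have rngtf : rng t true false = iota 1 tp.
  by rewrite /rng /eps Htf; case: (tp) tp0 => // n _; rewrite /= subn1.
have ttii : forall i, tt t i i = t i i by move=> i; rewrite /tt /eps eqxx subn0.
have tttf : tt t true false = tp.-1 by rewrite /tt /eps Htf /= subn1.
have rngP : forall i j r, (r \in rng t i j) = (eps i j <= r <= t i j)%N.
  move=> i j r; rewrite /rng mem_iota; have := tpos i j.
  by case: i; case: j; rewrite /eps /= => h; apply/idP/idP; lia.
have inC : forall i j r, r \in rng t i j -> hat (A i j r) \in Cseq t A.
  move=> i j r hr; apply/flatten_mapP; exists i; first by case: (i).
  apply/flatten_mapP; exists j; first by case: (j).
  by apply/mapP; exists r.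
have outC : forall M, M \in Cseq t A -> exists i j r, r \in rng t i j /\ M = hat (A i j r).
  by move=> M /flatten_mapP [i _ /flatten_mapP [j _ /mapP [r hr ->]]]; exists i, j, r.
have freeA : forall i j, free [seq A i j r | r <- rng t i j].
  move=> i j; apply: (@free_of_basis _ _ _ _ (B2 i j)).
  by rewrite !size_map size_iota /rng size_iota.
have nzA : forall i j r, r \in rng t i j -> A i j r != 0.
  by move=> i j r hr; apply: (free_not0 (freeA i j)); apply: map_f.
have freeE : forall i j, free [seq E i j r | r <- iota 0 (tt t i j).+1].
  by move=> i j; case/andP: (B2 i j).
have spanEA : forall i j, span [seq E i j r | r <- iota 0 (tt t i j).+1]
                         = span [seq A i j r | r <- rng t i j].
  by move=> i j; case/andP: (B2 i j) => /eqP.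
have prodC : forall M1 M2, M1 \in Cseq t A -> M2 \in Cseq t A ->
    M1 *m M2 \in span (Cseq t A).
  move=> M1 M2 /outC [i [j [r [hr ->]]]] /outC [j' [h [s [hs ->]]]].
  case: (eqVneq j j') => [ejj|njj].
    by subst j'; apply: Aprod; rewrite -rngP.
  suff -> : hat (A i j r) *m hat (A j' h s) = 0 by rewrite mem0v.
  move: (A i j r) (A j' h s); clear hr hs.
  by case: i j j' h njj => [] [] [] [] //= _ M N;
    rewrite mulmx_block !mulmx0 !mul0mx !addr0 block_mx0.
have ulC : forall M, M \in span (Cseq t A) ->
    ulsubmx M \in span [seq A true true r | r <- rng t true true].
  apply: (@lin_span _ _ _ (fun M => ulsubmx M)).
    by move=> a u v; rewrite /ulsubmx !linearP.
  move=> M /outC [i [j [r [hr ->]]]].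
  case: i j hr => [] [] hr; cbn [hat]; rewrite block_mxKul ?mem0v //.
  by apply: memv_span; apply: map_f.
have drC : forall M, M \in span (Cseq t A) ->
    drsubmx M \in span [seq A false false r | r <- rng t false false].
  apply: (@lin_span _ _ _ (fun M => drsubmx M)).
    by move=> a u v; rewrite /drsubmx !linearP.
  move=> M /outC [i [j [r [hr ->]]]].
  case: i j hr => [] [] hr; cbn [hat]; rewrite block_mxKdr ?mem0v //.
  by apply: memv_span; apply/mapP; exists r.
have symS : forall i M, M \in span [seq A i i r | r <- rng t i i] -> M^T = M.
  move=> i M HM; apply/eqP; rewrite -subr_eq0 -memv0.
  apply: (@lin_span _ _ _ (fun M => M^T - M) _ _ _ _ M HM).
    by move=> a u v; rewrite linearP /= scalerBr opprD addrACA.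
  move=> N /mapP [r hr ->]; rewrite Fsym ?subrr ?mem0v //.
  by move: hr; rewrite rngP => /andP [].
have F2 : forall h, h \in iota 1 tp ->
    (A true false h)^T \in [seq A false true r | r <- rng t false true].
  move=> h hh; have hr : h \in rng t true false by rewrite rngtf.
  have := Atr _ (inC _ _ _ hr); move/outC => [i [j [r [hr' E']]]].
  move: E'; cbn [hat]; rewrite tr_block_mx !trmx0.
  case: i j hr' => [] [] hr'; cbn [hat] => /eq_block_mx [_ _ H _];
    try by case/negP: (nzA _ _ _ hr); apply/eqP; apply: tr0.
  by rewrite H map_f.
have F1 : forall r, r \in rng t false true ->
    exists2 h, h \in iota 1 tp & A false true r = (A true false h)^T.
  move=> r hr.
  have := Atr _ (inC _ _ _ hr); move/outC => [i [j [h [hh E']]]].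
  move: E'; cbn [hat]; rewrite tr_block_mx !trmx0.
  case: i j hh => [] [] hh; cbn [hat] => /eq_block_mx [_ H _ _];
    try by case/negP: (nzA _ _ _ hr); apply/eqP; apply: tr0.
  by exists h; [rewrite -rngtf | rewrite -H trmxK].
have F5 : (tp <= t false true)%N.
  have := tpos false true.
  have : (size [seq (A true false h)^T | h <- iota 1 tp] <=
          size [seq A false true r | r <- rng t false true])%N.
    apply: uniq_leq_size; last by move=> M /mapP [h hh ->]; apply: F2.
    rewrite (map_comp trmx (A true false)) map_inj_uniq; last exact: trmx_inj.
    by have := free_uniq (freeA true false); rewrite rngtf.
  by rewrite !size_map size_iota /rng size_iota /eps /=; lia.
have ttft : (tp.-1 <= tt t false true)%N by rewrite /tt /eps /=; lia.
have EtfN : forall s, (s <= tp.-1)%N ->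
    E true false s \in span [seq A true false h | h <- iota 1 tp].
  move=> s hs; rewrite -rngtf -spanEA; apply: memv_span; apply: map_f.
  by rewrite mem_iota tttf; lia.
have spanAS : forall i (S : {vspace 'M[R]_(x i)}), 1%:M \in S ->
    (forall s, (s < t i i)%N -> E i i s \in S) ->
    forall M, M \in span [seq A i i r | r <- rng t i i] -> M \in S.
  move=> i S S1 HE M; rewrite -spanEA => HM.
  suff /subvP : (span [seq E i i s | s <- iota 0 (tt t i i).+1] <= S)%VS by apply.
  apply/span_subvP => N /mapP [s hs ->].
  rewrite ttii mem_iota /= in hs.
  case: (ltnP s (t i i)) => [/HE //| hs2].
  have -> : s = t i i by lia.
  set m := t i i.
  set Es := [seq E i i s0 | s0 <- iota 0 (tt t i i).+1].
  have szE : size Es = m.+1 by rewrite size_map size_iota ttii.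
  have nthE : forall k : 'I_(size Es), Es`_k = E i i k.
    move=> k; have := ltn_ord k; rewrite {2}szE => hk.
    have hk' : (k < (tt t i i).+1)%N by rewrite (leq_trans hk) // ttii.
    by rewrite /Es (nth_map 0%N) ?size_iota // nth_iota.
  have km : (m < size Es)%N by rewrite szE.
  pose m' := Ordinal km.
  have h1 : 1%:M \in span Es.
    rewrite spanEA -(A0 i); apply: memv_span; apply: map_f.
    by rewrite rngP /eps eqxx /=.
  have e1 := coord_span (X := in_tuple Es) h1.
  set c := coord _ in e1.
  rewrite (bigD1 m') // in e1.
  have B4m : forall k : 'I_(size Es), k != m' -> E i i m *m E i i k = 0.
    move=> k hk; have := ltn_ord k; rewrite {2}szE => hkl.
    apply: (B4 i i i m k _ _).2; rewrite ?ttii //.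
    by move=> ek; case/negP: hk; apply/eqP/val_inj => /=; rewrite -ek.
  have hM : E i i m *m 1%:M = c m' 1%:M *: E i i m.
    rewrite {1}e1 mulmxDr -scalemxAr nthE.
    rewrite ((B4 i i i m m _ _).1 erefl).2 ?ttii //.
    rewrite mulmx_sumr big1 ?addr0 // => k hk.
    by rewrite -scalemxAr nthE B4m // scaler0.
  have nzM : E i i m != 0.
    apply: (free_not0 (freeE i i)); apply/mapP; exists m => //; rewrite mem_iota ttii /m; lia.
  have c1 : c m' 1%:M = 1.
    move: hM; rewrite mulmx1 => /eqP; rewrite -subr_eq0 -{1}[E i i m]scale1r.
    rewrite -scalerBl scaler_eq0 (negbTE nzM) orbF subr_eq0 => /eqP.
    by move=> <-.
  rewrite c1 scale1r nthE in e1.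
  have -> : E i i m = 1%:M - \sum_(k < size Es | k != m') c k 1%:M *: Es`_k.
    by apply/eqP; rewrite eq_sym subr_eq; apply/eqP.
  apply: memvB => //; apply: memv_suml => k hk; apply: memvZ; rewrite nthE.
  apply: HE; have := ltn_ord k; rewrite {2}szE ltnS leq_eqVlt => /orP [/eqP ek|//].
  by case/negP: hk; apply/eqP/val_inj => /=; rewrite ek.
set N := A true false.
set S1 := span (1%:M :: [seq N i *m (N j)^T | i <- iota 1 tp, j <- iota 1 tp]).
set S2 := span (1%:M :: [seq (N i)^T *m N j | i <- iota 1 tp, j <- iota 1 tp]).
set SN := span [seq N h | h <- iota 1 tp].
have bil1 : forall u v, u \in SN -> v \in SN -> u *m v^T \in S1.
  apply: (@bilin_span _ _ _ _ (fun u v => u *m v^T)).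
  - by move=> a u u' v; rewrite mulmxDl scalemxAl.
  - by move=> a u v v'; rewrite linearP /= mulmxDr scalemxAr.
  - move=> y z /mapP [i hi ->] /mapP [j hj ->]; apply: memv_span.
    by rewrite in_cons; apply/orP; right; apply: allpairs_f.
have bil2 : forall u v, u \in SN -> v \in SN -> u^T *m v \in S2.
  apply: (@bilin_span _ _ _ _ (fun u v => u^T *m v)).
  - by move=> a u u' v; rewrite linearP /= mulmxDl scalemxAl.
  - by move=> a u v v'; rewrite mulmxDr scalemxAr.
  - move=> y z /mapP [i hi ->] /mapP [j hj ->]; apply: memv_span.
    by rewrite in_cons; apply/orP; right; apply: allpairs_f.
have Ett : forall s, (s < t true true)%N -> E true true s \in S1.
  move=> s; rewrite Htt => hs.
  have h1 : (s <= tt t true false)%N by rewrite tttf; lia.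
  have h2 : (s <= tt t false true)%N by lia.
  rewrite -((B4 true false true s s h1 h2).1 erefl).2 -(B3 true false s) //.
  by apply: bil1; apply: EtfN; lia.
have Eff : forall s, (s < t false false)%N -> E false false s \in S2.
  move=> s; rewrite Hff => hs.
  have h1 : (s <= tt t true false)%N by rewrite tttf; lia.
  have h2 : (s <= tt t false true)%N by lia.
  rewrite -((B4 false true false s s h2 h1).1 erefl).2 -(B3 true false s) //.
  by apply: bil2; apply: EtfN; lia.
have NNt : forall i j, i \in iota 1 tp -> j \in iota 1 tp ->
    N i *m (N j)^T \in span [seq A true true r | r <- rng t true true].
  move=> i j hi hj; rewrite -rngtf in hi hj.
  have := ulC _ (prodC _ _ (inC true false i hi) (Atr _ (inC true false j hj))).
  cbn [hat]; rewrite tr_block_mx !trmx0 mulmx_block !mulmx0 !mul0mx !addr0.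
  by rewrite add0r block_mxKul.
have NtN : forall i j, i \in iota 1 tp -> j \in iota 1 tp ->
    (N i)^T *m N j \in span [seq A false false r | r <- rng t false false].
  move=> i j hi hj; rewrite -rngtf in hi hj.
  have := drC _ (prodC _ _ (Atr _ (inC true false i hi)) (inC true false j hj)).
  cbn [hat]; rewrite tr_block_mx !trmx0 mulmx_block !mulmx0 !mul0mx !addr0 ?add0r.
  by rewrite block_mxKdr.
have eqBC : BCseq tp tp tp (A true true) (A false false) N =i Cseq t A.
  move=> M; apply/idP/idP.
    move=> HM; rewrite /BCseq !mem_cat in HM; move: HM => /orP [/mapP [i hi ->]|/orP [/mapP [i hi ->]|/orP [/mapP [i hi ->]|/mapP [i hi ->]]]].
    - by have H := inC true true i; cbn [hat] in H; apply: H; rewrite rngtt.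
    - by have H := inC false false i; cbn [hat] in H; apply: H; rewrite rngff.
    - by have H := inC true false i; cbn [hat] in H; apply: H; rewrite rngtf.
    - have hi' : i \in rng t true false by rewrite rngtf.
      have H := Atr _ (inC true false i hi'); cbn [hat] in H.
      by rewrite tr_block_mx !trmx0 in H.
  move/outC => [i [j [r [hr ->]]]]; case: i j hr => [] [] hr; cbn [hat]; rewrite /BCseq !mem_cat.
  - by apply/orP; left; apply/mapP; exists r => //; rewrite -rngtt.
  - by apply/orP; right; apply/orP; right; apply/orP; left; apply/mapP; exists r => //; rewrite -rngtf.
  - case: (F1 r hr) => h hh ->.
    by apply/orP; right; apply/orP; right; apply/orP; right; apply/mapP; exists h.
  - by apply/orP; right; apply/orP; left; apply/mapP; exists r => //; rewrite -rngff.
split => //.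
rewrite /bipartite_cc.
split; first by [].
split.
  split; [|split].
  - by move=> i hi; apply: A01; rewrite /eps /= Htt.
  - by move=> i hi; apply: A01; rewrite /eps /= Hff.
  - by move=> h hh; apply: A01; rewrite /eps /= Htf.
split; first by split; apply: A0.
split.
  rewrite /BCseq !big_cat_add !big_map.
  rewrite (sum_block _ _ _ _ _ _ _ (fun j => A true true j) (fun _ => 0) (fun _ => 0) (fun _ => 0)).
  rewrite (sum_block _ _ _ _ _ _ _ (fun _ => 0) (fun _ => 0) (fun _ => 0) (fun j => A false false j)).
  rewrite (sum_block _ _ _ _ _ _ _ (fun _ => 0) (fun j => N j) (fun _ => 0) (fun _ => 0)).
  rewrite (sum_block _ _ _ _ _ _ _ (fun _ => 0) (fun _ => 0) (fun j => (N j)^T) (fun _ => 0)).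
  rewrite !big1_eq !add_block_mx !addr0 !add0r.
  have St : \sum_(j <- iota 0 tp.+1) A true true j = Jmx R _ _ by rewrite -rngtt Asum.
  have Sf : \sum_(j <- iota 0 tp.+1) A false false j = Jmx R _ _ by rewrite -rngff Asum.
  have Sn : \sum_(j <- iota 1 tp) N j = Jmx R _ _ by rewrite -rngtf Asum.
  have Snt : \sum_(j <- iota 1 tp) (N j)^T = Jmx R _ _.
    by rewrite -linear_sum /= Sn /Jmx trmx_const.
  by rewrite St Sf Sn Snt /Jmx block_mx_const.
split.
  by move=> M; rewrite !eqBC; apply: Atr.
split.
  by move=> M1 M2; rewrite !eqBC (eq_span eqBC); apply: prodC.
split.
  move=> i j hi hj; rewrite -!mem_iota in hi hj *.
  split.
    have := symS true _ (NNt i j hi hj); rewrite trmx_mul trmxK.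
    by move=> ->.
  have := symS false _ (NtN i j hi hj); rewrite trmx_mul trmxK.
  by move=> ->.
split.
  apply/eqP; rewrite eqEsubv; apply/andP; split.
    apply/span_subvP => M; rewrite in_cons => /orP [/eqP ->|/allpairsP [[i j] [hi hj ->]]].
      by rewrite -(A0 true); apply: memv_span; apply/mapP; exists 0%N.
    by rewrite -rngtt; apply: NNt.
  apply/span_subvP => M /mapP [r hr ->].
  apply: (spanAS true S1) => //; first by apply: memv_span; apply: mem_head.
  by apply: memv_span; apply/mapP; exists r; rewrite ?rngtt.
apply/eqP; rewrite eqEsubv; apply/andP; split.
  apply/span_subvP => M; rewrite in_cons => /orP [/eqP ->|/allpairsP [[i j] [hi hj ->]]].
    by rewrite -(A0 false); apply: memv_span; apply/mapP; exists 0%N.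
  by rewrite -rngff; apply: NtN.
apply/span_subvP => M /mapP [r hr ->].
apply: (spanAS false S2) => //; first by apply: memv_span; apply: mem_head.
by apply: memv_span; apply/mapP; exists r; rewrite ?rngff.
Qed.
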